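(* Consider the half-duplex (HD) two-stage relay selection (TRS) scheme described in the context with $K\ge1$ relays, with $\varpi=0$, thresholds $\gamma_{th_j}=2^{2R_{D_j}}-1$ for $j=1,2$, and power coefficients satisfying $0<a_1<a_2$, $a_1+a_2=1$, $a_2>a_1\gamma_{th_2}$. Then its diversity order equals the number of relays: $$-\lim_{\rho\to\infty}\frac{\log P_{TRS}^{HD}(\rho)}{\log\rho}=K .$$
   Context: Network model. A base station (BS) is at the origin of the plane. There are $K\ge 1$ relays $R_1,\dots,R_K$ whose positions are i.i.d. uniformly distributed in the disc of radius $R_{\mathcal D}>0$ centred at the origin; $d_{SR_i}$ is the distance from the BS to $R_i$. Two users $D_1,D_2$ are at fixed points of the plane at distances $d_1,d_2>0$ from the BS, and $d_{R_iD_j}$ is the Euclidean distance between $R_i$ and $D_j$. Let $\alpha>0$ be the path loss exponent. The random variables $g_{SR_i}$, $g_{R_iD_1}$, $g_{R_iD_2}$ ($i=1,\dots,K$) are exponentially distributed with mean $1$ (squared magnitudes of $\mathcal{CN}(0,1)$ Rayleigh coefficients), $Z_i$ is exponentially distributed with mean $\Omega_{LI}>0$, and all of these are mutually independent and independent of the relay positions. Put $X_i=g_{SR_i}/(1+d_{SR_i}^\alpha)$ and $Y_{ji}=g_{R_iD_j}/(1+d_{R_iD_j}^\alpha)$. Let $\rho>0$ be the transmit SNR, $a_1,a_2$ power allocation coefficients, and $\varpi\in\{0,1\}$ the duplex factor. Define $\gamma_{D_2\to R_i}=\frac{\rho X_i a_2}{\rho X_i a_1+\rho\varpi Z_i+1}$,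 $\gamma_{D_1\to R_i}=\frac{\rho X_i a_1}{\rho\varpi Z_i+1}$, $\gamma^{(i)}_{D_2\to D_1}=\frac{\rho Y_{1i}a_2}{\rho Y_{1i}a_1+1}$, $\gamma^{(i)}_{D_1}=\rho Y_{1i}a_1$, $\gamma^{(i)}_{D_2}=\frac{\rho Y_{2i}a_2}{\rho Y_{2i}a_1+1}$. Target rates $R_{D_1},R_{D_2}>0$ are given; in HD mode $\varpi=0$ and $\gamma_{th_j}=2^{2R_{D_j}}-1$. TRS scheme: let $S=\{i: \gamma_{D_2\to R_i}\ge\gamma_{th_2},\ \gamma^{(i)}_{D_2\to D_1}\ge\gamma_{th_2},\ \gamma^{(i)}_{D_2}\ge\gamma_{th_2}\}$. The outage event is that either $S=\emptyset$, or $S\neq\emptyset$ and $\max_{i\in S}\min\{\gamma_{D_1\to R_i},\gamma^{(i)}_{D_1}\}<\gamma_{th_1}$; $P_{TRS}(\rho)$ is its probability, and $P_{TRS}^{HD}$ denotes it in HD mode. *)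

(* Defs.v *)
From HB Require Import structures.
From mathcomp Require Import all_boot all_order all_algebra.
From mathcomp Require Import all_classical all_reals all_analysis.
Set Implicit Arguments. Unset Strict Implicit. Unset Printing Implicit Defensive.
Import Order.TTheory GRing.Theory Num.Theory.
Import numFieldNormedType.Exports.
Local Open Scope classical_set_scope.
Local Open Scope ring_scope.

Definition preimg_class d d' (T : measurableType d) (S : measurableType d')
  (X : T -> S) : set (set T) :=
  [set E | exists B, measurable B /\ E = X @^-1` B].

Definition mutual_indep d (T : measurableType d) (R : realType)
  (P : probability T R) (I : eqType) (F : I -> set (set T)) : Prop :=
  forall (J : seq I) (A : I -> set T), uniq J ->
    (forall j, j \in J -> F j (A j)) ->
    P (\bigcap_(j in [set` J]) A j) = (\prod_(j <- J) P (A j))%E.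

(** Exponential distribution with mean [m] (rate 1/m). *)
Definition exp_distributed d (T : measurableType d) (R : realType)
  (P : probability T R) (X : T -> R) (m : R) : Prop :=
  measurable_fun setT X /\
  forall B : set R, measurable B -> P (X @^-1` B) = exponential_prob m^-1 B.

Definition disc (R : realType) (r : R) : set (R * R) :=
  [set p | p.1 ^+ 2 + p.2 ^+ 2 <= r ^+ 2].

Definition unif_disc_distributed d (T : measurableType d) (R : realType)
  (P : probability T R) (Q : T -> R * R) (r : R) : Prop :=
  measurable_fun setT Q /\
  forall B : set (R * R), measurable B ->
    P (Q @^-1` B) =
    ((@lebesgue_measure R \x @lebesgue_measure R) (B `&` disc r)
      * ((pi * r ^+ 2)^-1)%:E)%E.

Definition dist2 (R : realType) (p q : R * R) : R :=
  Num.sqrt ((p.1 - q.1) ^+ 2 + (p.2 - q.2) ^+ 2).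

Definition pathloss (R : realType) (alpha dd : R) : R := 1 + dd `^ alpha.

Section SINR.
Variables (R : realType) (rho a1 a2 varpi : R).
Definition gam_D2_R (X Z : R) : R := rho * X * a2 / (rho * X * a1 + rho * varpi * Z + 1).
Definition gam_D1_R (X Z : R) : R := rho * X * a1 / (rho * varpi * Z + 1).
Definition gam_D2_D1 (Y1 : R) : R := rho * Y1 * a2 / (rho * Y1 * a1 + 1).
Definition gam_D1 (Y1 : R) : R := rho * Y1 * a1.
Definition gam_D2 (Y2 : R) : R := rho * Y2 * a2 / (rho * Y2 * a1 + 1).
End SINR.

Definition trs_outage (R : realType) (K : nat) (rho a1 a2 varpi th1 th2 : R)
  (X Y1 Y2 Z : 'I_K -> R) : bool :=
  let S := [set i : 'I_K | [&& th2 <= gam_D2_R rho a1 a2 varpi (X i) (Z i),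
                               th2 <= gam_D2_D1 rho a1 a2 (Y1 i)
                             & th2 <= gam_D2 rho a1 a2 (Y2 i)]] in
  (S == set0) ||
  ((S != set0) &&
   (\big[Order.max/0]_(i in S)
       Order.min (gam_D1_R rho a1 varpi (X i) (Z i)) (gam_D1 rho a1 (Y1 i))
     < th1)).

Definition hd_threshold (R : realType) (rate : R) : R := 2 `^ (2 * rate) - 1.

(** Outage probability of TRS (as a real number) for the given random
    elements: positions Q, small-scale gains gSR, gRD1, gRD2 and loop
    interference Z, user positions D1 D2. *)
Definition P_TRS d (T : measurableType d) (R : realType) (P : probability T R)
  (K : nat) (alpha a1 a2 varpi th1 th2 : R) (D1 D2 : R * R)
  (Q : 'I_K -> T -> R * R) (gSR gRD1 gRD2 Z : 'I_K -> T -> R) (rho : R) : R :=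
  fine (P [set w | trs_outage rho a1 a2 varpi th1 th2
     (fun i => gSR i w / pathloss alpha (dist2 (Q i w) (0, 0)))
     (fun i => gRD1 i w / pathloss alpha (dist2 (Q i w) D1))
     (fun i => gRD2 i w / pathloss alpha (dist2 (Q i w) D2))
     (fun i => Z i w)]).

Definition relay_family d (T : measurableType d) (K : nat)
  (R : realType) (Q : 'I_K -> T -> R * R) (gSR gRD1 gRD2 Z : 'I_K -> T -> R)
  (ik : 'I_K * 'I_5) : set (set T) :=
  match nat_of_ord ik.2 with
  | 0 => preimg_class (Q ik.1)
  | 1 => preimg_class (gSR ik.1)
  | 2 => preimg_class (gRD1 ik.1)
  | 3 => preimg_class (gRD2 ik.1)
  | _ => preimg_class (Z ik.1)
  end.

(* Main.v *)
Require Import Defs.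
From HB Require Import structures.
From mathcomp Require Import all_boot all_order all_algebra.
From mathcomp Require Import all_classical all_reals all_analysis.
From mathcomp Require Import ring lra measurable_realfun.
Import Order.TTheory GRing.Theory Num.Theory.
Import numFieldNormedType.Exports.
Local Open Scope classical_set_scope.
Local Open Scope ring_scope.
Lemma limit_squeeze (R : realType) (K : nat) (p : R -> R) (cL cU r0 : R) :
  0 < cL -> 0 < cU ->
  (forall rho, r0 < rho -> cL / rho ^+ K <= p rho /\ p rho <= cU / rho ^+ K) ->
  (- (ln (p rho) / ln rho)) @[rho --> +oo] --> (K%:R : R).
Proof.
move=> cL0 cU0 hb; apply/cvgrPdist_lt => e e0.
set C := `|ln cL| + `|ln cU|.
exists (Num.max r0 (Num.max 1 (expR (C / e)))); split; first exact: num_real.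
move=> rho; rewrite !gt_max => /andP[r0r /andP[r1 rex]].
have r0' : 0 < rho by apply: lt_trans r1.
have l0 : 0 < ln rho by apply: ln_gt0.
have hl : C / e < ln rho.
  by rewrite -[C / e]expRK ltr_ln ?posrE ?expR_gt0.
have [hL hU] := hb rho r0r.
have rK : 0 < rho ^+ K by apply: exprn_gt0.
have pL : 0 < cL / rho ^+ K by apply: divr_gt0.
have p0 : 0 < p rho by apply: lt_le_trans hL.
have pU : 0 < cU / rho ^+ K by apply: divr_gt0.
have hlnL : ln cL - ln rho *+ K <= ln (p rho).
  by rewrite -lnXn // -ln_div ?posrE // ler_ln ?posrE.
have hlnU : ln (p rho) <= ln cU - ln rho *+ K.
  by rewrite -lnXn // -ln_div ?posrE // ler_ln ?posrE.
set t := ln (p rho) + ln rho *+ K.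
have -> : K%:R - - (ln (p rho) / ln rho) = t / ln rho.
  rewrite /t -mulr_natr; field; exact: lt0r_neq0.
have ht : `|t| <= C.
  have h1 := ler_norm (- ln cL); rewrite normrN in h1.
  have h2 := ler_norm (ln cU).
  have h3 := normr_ge0 (ln cU); have h4 := normr_ge0 (ln cL).
  rewrite ler_norml; apply/andP; split; rewrite /C /t; lra.
rewrite normrM [`|_^-1|]gtr0_norm ?invr_gt0 // ltr_pdivrMr //.
apply: (le_lt_trans ht); rewrite mulrC -ltr_pdivrMr //.
Qed.
Lemma exp_le d (T : measurableType d) (R : realType) (P : probability T R)
  (X : T -> R) (v : R) :
  exp_distributed P X 1 -> 0 < v -> (P (X @^-1` `]-oo, v[%classic) <= v%:E)%E.
Proof.
move=> [mX hX] v0.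
have mpre : forall B : set R, measurable B -> measurable (X @^-1` B).
  by move=> B mB; rewrite -[X @^-1` B]setTI; apply: mX.
have sub : X @^-1` `]-oo, v[%classic `<=`
  X @^-1` `]-oo, 0[%classic `|` X @^-1` `[0, v]%classic.
  move=> w /=; rewrite !in_itv /= => h.
  by case: (ltP (X w) 0) => h0; [left|right; apply/andP; split; [|apply: ltW]].
apply: (le_trans (le_measure _ _ _ sub)); rewrite ?inE.
- exact: mpre (measurable_itv _).
- by apply: measurableU; apply: mpre; exact: measurable_itv.
apply: (le_trans (measureU2 _ _ _)); try (apply: mpre; exact: measurable_itv).
change ((P (X @^-1` `]-oo, 0%R[%classic) + P (X @^-1` `[0%R, v]%classic))%E <= v%:E)%E.
rewrite !hX; try exact: measurable_itv.
rewrite invr1 exponential_prob_itv0c //.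
have -> : exponential_prob (1:R) `]-oo, 0[%classic = 0%E.
  rewrite /exponential_prob; apply: integral0_eq => x; rewrite /= in_itv /= => x0.
  by rewrite lt0_exponential_pdf.
rewrite add0e lee_fin ?mul1r ?mulN1r ?mulNr ?mul1r.
have := expR_ge1Dx (- v); lra.
Qed.

Lemma exp_ge d (T : measurableType d) (R : realType) (P : probability T R)
  (X : T -> R) (u : R) :
  exp_distributed P X 1 -> 0 < u -> u <= 1 ->
  ((u * expR (-1))%:E <= P (X @^-1` `[0%R, u]%classic))%E.
Proof.
move=> [mX hX] u0 u1.
rewrite hX; last exact: measurable_itv.
rewrite invr1 exponential_prob_itv0c // ?mul1r ?mulN1r ?mulNr ?mul1r lee_fin.
have E1 := expR_ge1Dx u.
have Ep := expR_gt0 u.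
have h1 : expR (-1) <= expR (- u) by rewrite ler_expR lerN2.
rewrite expRN in h1 *.
have hu : u * expR (-1) <= u / expR u by rewrite ler_pM2l.
apply: (le_trans hu).
rewrite ler_pdivrMr // mulrBl mulVf ?gt_eqF //; lra.
Qed.
Lemma mf_inv (R : realType) : measurable_fun setT (@GRing.inv R).
Proof.
rewrite -(setUv [set (0:R)]); apply/measurable_funU => //.
  exact: measurableC.
split; first exact: measurable_fun_set1.
apply: measurable_realfun.open_continuous_measurable_fun.
  by apply: closed_openC; exact/accessible_closed_set1/hausdorff_accessible/Rhausdorff.
by move=> x; rewrite inE /= => x0; apply: inv_continuous; apply/eqP.
Qed.

Lemma mf_pl (R : realType) (alpha : R) (c : R * R) :
  measurable_fun setT (fun p : R * R => pathloss alpha (dist2 p c)).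
Proof.
rewrite /pathloss /dist2.
apply: measurable_funD => //.
apply: (measurableT_comp (f := fun x : R => x `^ alpha)); first exact: measurable_realfun.measurable_powR.
apply: (measurableT_comp (f := @Num.sqrt R)).
  apply: measurable_realfun.continuous_measurable_fun; exact: sqrt_continuous.
apply: measurable_funD; apply: measurable_funX; apply: measurable_funB => //.
Qed.

Lemma mf_ratio d (T : measurableType d) (R : realType) (alpha : R) (c : R * R)
  (Q : T -> R * R) (g : T -> R) :
  measurable_fun setT Q -> measurable_fun setT g ->
  measurable_fun setT (fun w => g w / pathloss alpha (dist2 (Q w) c)).
Proof.
move=> mQ mg; apply: measurable_funM => //.
apply: (measurableT_comp (f := @GRing.inv R)); first exact: mf_inv.
exact: (measurableT_comp (mf_pl _ alpha c) mQ).
Qed.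

Lemma mset_le d (T : measurableType d) (R : realType) (h : T -> R) (c : R) :
  measurable_fun setT h -> measurable [set w | c <= h w].
Proof.
move=> mh; have := mh measurableT _ (measurable_itv `[c, +oo[).
rewrite setTI; congr measurable; apply/seteqP; split => w /=;
  by rewrite in_itv /= andbT.
Qed.

Lemma mf_frac d (T : measurableType d) (R : realType) (rho a b e : R) (X Z : T -> R) :
  measurable_fun setT X -> measurable_fun setT Z ->
  measurable_fun setT (fun w => rho * X w * a / (rho * X w * b + rho * e * Z w + 1)).
Proof.
move=> mX mZ; apply: measurable_funM.
  apply: measurable_funM => //; apply: measurable_funM => //.
apply: (measurableT_comp (f := @GRing.inv R)); first exact: mf_inv.
apply: measurable_funD => //; apply: measurable_funD.
  apply: measurable_funM => //; apply: measurable_funM => //.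
apply: measurable_funM => //.
Qed.
Definition good {R : realType} (rho a1 a2 varpi th1 th2 x y1 y2 z : R) : bool :=
  [&& th2 <= gam_D2_R rho a1 a2 varpi x z, th2 <= gam_D2_D1 rho a1 a2 y1,
      th2 <= gam_D2 rho a1 a2 y2, th1 <= gam_D1_R rho a1 varpi x z
    & th1 <= gam_D1 rho a1 y1].

Lemma outage_char (R : realType) (K : nat) (rho a1 a2 varpi th1 th2 : R)
  (X Y1 Y2 Z : 'I_K -> R) : 0 < th1 ->
  trs_outage rho a1 a2 varpi th1 th2 X Y1 Y2 Z =
  ~~ [exists i, good rho a1 a2 varpi th1 th2 (X i) (Y1 i) (Y2 i) (Z i)].
Proof.
move=> th10; rewrite /trs_outage.
set S := [set i | _].
case: (boolP [exists i, _]) => [/existsP [i /and5P [h1 h2 h3 h4 h5]] | /existsPn hn] /=.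
  have iS : i \in S by rewrite inE; apply/and3P.
  have -> : (S == set0) = false.
    by apply/negbTE/negP => /eqP S0; move: iS; rewrite S0 inE.
  apply/negbTE; rewrite -leNgt.
  apply: le_trans (le_bigmax_cond _ _ iS).
  by rewrite le_min h4 h5.
case: (S == set0) => //=.
apply/bigmax_ltP; split => // i; rewrite inE => /and3P [h1 h2 h3].
have := hn i; rewrite /good h1 h2 h3 /= negb_and -!ltNge => hh.
by rewrite gt_min.
Qed.
Lemma PE d (T : measurableType d) (R : realType) (P : probability T R) (A : set T) :
  measurable A -> P A = (fine (P A))%:E.
Proof.
move=> mA; rewrite fineK // ge0_fin_numE ?measure_ge0 //.
exact: (le_lt_trans (probability_le1 _ mA) (ltry _)).
Qed.

Lemma indep_prod d (T : measurableType d) (R : realType) (P : probability T R)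
  (K : nat) (F : 'I_K * 'I_5 -> set (set T)) (f : 'I_K -> 'I_5) (A : 'I_K -> set T) :
  mutual_indep P F -> (forall i, F (i, f i) (A i)) ->
  P [set w | forall i, A i w] = (\prod_(i <- enum 'I_K) P (A i))%E.
Proof.
move=> hind hA.
have h := hind [seq (i, f i) | i <- enum 'I_K] (fun ik => A ik.1).
rewrite big_map /= in h; rewrite -h.
- congr (P _); apply/seteqP; split => w /=.
  + move=> hw j /=; case/mapP => i _ -> /=; exact: hw.
  + move=> hw i; apply: (hw (i, f i)) => /=; apply: map_f; exact: mem_enum.
- rewrite map_inj_uniq ?enum_uniq //; by move=> i j [].
- by move=> j /mapP [i _ ->]; exact: hA.
Qed.

Lemma subadd_seq d (T : measurableType d) (R : realType) (P : probability T R)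
  (I : Type) (s : seq I) (G : I -> set T) :
  (forall i, measurable (G i)) ->
  (P (\big[setU/set0]_(i <- s) G i) <= \sum_(i <- s) P (G i))%E.
Proof.
move=> mG; elim: s => [|a s IH]; first by rewrite !big_nil measure0.
rewrite !big_cons.
apply: le_trans (measureU2 _ _ _) _ => //.
  exact: bigsetU_measurable.
exact: leeD.
Qed.
Lemma prod_const_seq (R : realType) (I : Type) (s : seq I) (c : R) :
  \prod_(i <- s) c = c ^+ size s.
Proof. by elim: s => [|a s IH]; rewrite ?big_nil ?expr0 // big_cons IH exprS. Qed.

Lemma sum_const_seq (R : realType) (I : Type) (s : seq I) (c : R) :
  \sum_(i <- s) c = c *+ size s.
Proof. by elim: s => [|a s IH]; rewrite ?big_nil ?mulr0n // big_cons IH mulrS. Qed.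

Lemma in_bigsetU (T : Type) (I : eqType) (s : seq I) (G : I -> set T) x w :
  x \in s -> G x w -> (\big[setU/set0]_(i <- s) G i) w.
Proof.
elim: s => [//|a s IH]; rewrite in_cons big_cons => /orP [/eqP <- h|xs h].
  by left.
by right; apply: IH.
Qed.

Lemma meas_forall d (T : measurableType d) (K : nat) (A : 'I_K -> set T) :
  (forall i, measurable (A i)) -> measurable [set w | forall i, A i w].
Proof.
move=> mA; have -> : [set w | forall i, A i w] = \bigcap_(i in [set: 'I_K]) A i.
  by apply/seteqP; split => w /= h i //; apply: h.
apply: fin_bigcap_measurable; first exact: finite_finset.
by move=> i _; apply: mA.
Qed.

Lemma meas_disc (R : realType) (r : R) : measurable (disc r).
Proof.
have mh : measurable_fun setT (fun p : R * R => p.1 ^+ 2 + p.2 ^+ 2).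
  by apply: measurable_funD; apply: measurable_funX; [exact: measurable_fst|exact: measurable_snd].
have := mh measurableT _ (measurable_itv `]-oo, r ^+ 2]).
rewrite setTI; congr measurable; apply/seteqP; split => w /=;
  by rewrite in_itv /=.
Qed.

Lemma hd_pos (R : realType) (r : R) : 0 < r -> 0 < hd_threshold r.
Proof.
move=> r0; rewrite /hd_threshold subr_gt0.
have h1 : 1 <= 2 `^ (2 * r) :> R.
  rewrite -[X in X <= _](powRr0 (2:R)); apply: ler_powR; first by rewrite ler1n.
  by rewrite mulr_ge0 // ltW.
have h2 : 2 `^ (2 * r) != 1 :> R.
  rewrite powR_eq1 negb_or negb_or; apply/and3P; split.
  - by rewrite gt_eqF // ltr1n.
  - by rewrite -leNgt ler0n.
  - by rewrite gt_eqF // mulr_gt0.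
by rewrite lt_neqAle eq_sym h2 h1.
Qed.

Lemma cond2 (R : realType) (t a1 a2 th2 : R) : 0 < a1 -> a1 * th2 < a2 -> 0 < th2 ->
  th2 / (a2 - a1 * th2) <= t -> th2 <= t * a2 / (t * a1 + 1).
Proof.
move=> a10 ha th20; rewrite ler_pdivrMr ?subr_gt0 // => ht.
have t0 : 0 <= t.
  have : 0 <= t * (a2 - a1 * th2) by apply: le_trans ht; apply: ltW.
  by rewrite pmulr_lge0 // subr_gt0.
have d0 : 0 < t * a1 + 1 by rewrite ltr_wpDl // mulr_ge0 // ltW.
rewrite ler_pdivlMr //; nra.
Qed.

Lemma cond1 (R : realType) (t a1 th1 : R) : 0 < a1 -> th1 / a1 <= t -> th1 <= t * a1.
Proof. by move=> a10; rewrite ler_pdivrMr. Qed.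

Lemma tbound (R : realType) (rho s g PL Lmax : R) : 0 < rho -> 0 < s -> 1 <= PL -> PL <= Lmax ->
  s / rho <= g -> s / Lmax <= rho * (g / PL).
Proof.
move=> r0 s0 P1 PLL hg.
have PL0 : 0 < PL by apply: lt_le_trans P1.
have L0 : 0 < Lmax by apply: lt_le_trans PLL.
rewrite ler_pdivrMr // in hg.
rewrite mulrA ler_pdivlMr //.
have q0 : 0 < s / Lmax by apply: divr_gt0.
have hq : s / Lmax * Lmax = s by rewrite divfK // gt_eqF.
have : s / Lmax * PL <= s / Lmax * Lmax by rewrite ler_pM2l.
rewrite hq; nra.
Qed.
Lemma meas_good d (T : measurableType d) (R : realType) (rho a1 a2 varpi th1 th2 : R)
  (X Y1 Y2 Z : T -> R) :
  measurable_fun setT X -> measurable_fun setT Y1 -> measurable_fun setT Y2 ->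
  measurable_fun setT Z ->
  measurable [set w | good rho a1 a2 varpi th1 th2 (X w) (Y1 w) (Y2 w) (Z w)].
Proof.
move=> mX mY1 mY2 mZ.
have mY : forall Y : T -> R, measurable_fun setT Y ->
    measurable_fun setT (fun w => rho * Y w * a2 / (rho * Y w * a1 + 1)).
  move=> Y mY; apply: measurable_funM.
    by apply: measurable_funM => //; apply: measurable_funM.
  apply: (measurableT_comp (f := @GRing.inv R)); first exact: mf_inv.
  by apply: measurable_funD => //; apply: measurable_funM => //; apply: measurable_funM.
have -> : [set w | good rho a1 a2 varpi th1 th2 (X w) (Y1 w) (Y2 w) (Z w)] =
  [set w | th2 <= gam_D2_R rho a1 a2 varpi (X w) (Z w)] `&`
  ([set w | th2 <= gam_D2_D1 rho a1 a2 (Y1 w)] `&`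
  ([set w | th2 <= gam_D2 rho a1 a2 (Y2 w)] `&`
  ([set w | th1 <= gam_D1_R rho a1 varpi (X w) (Z w)] `&`
   [set w | th1 <= gam_D1 rho a1 (Y1 w)]))).
  apply/seteqP; split => w /=.
    by move/and5P => [? ? ? ? ?].
  by move=> [? [? [? [? ?]]]]; apply/and5P.
apply: measurableI; first by apply: mset_le; rewrite /gam_D2_R; exact: mf_frac.
apply: measurableI; first by apply: mset_le; rewrite /gam_D2_D1; exact: mY.
apply: measurableI; first by apply: mset_le; rewrite /gam_D2; exact: mY.
apply: measurableI; apply: mset_le.
  rewrite /gam_D1_R; apply: measurable_funM.
    by apply: measurable_funM => //; apply: measurable_funM.
  apply: (measurableT_comp (f := @GRing.inv R)); first exact: mf_inv.
  by apply: measurable_funD => //; apply: measurable_funM.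
by rewrite /gam_D1; apply: measurable_funM => //; apply: measurable_funM.
Qed.

Lemma meas_outage d (T : measurableType d) (R : realType) (K : nat)
  (rho a1 a2 varpi th1 th2 : R) (X Y1 Y2 Z : 'I_K -> T -> R) : 0 < th1 ->
  (forall i, measurable_fun setT (X i)) -> (forall i, measurable_fun setT (Y1 i)) ->
  (forall i, measurable_fun setT (Y2 i)) -> (forall i, measurable_fun setT (Z i)) ->
  measurable [set w | trs_outage rho a1 a2 varpi th1 th2
     (fun i => X i w) (fun i => Y1 i w) (fun i => Y2 i w) (fun i => Z i w)].
Proof.
move=> th10 mX mY1 mY2 mZ.
have -> : [set w | trs_outage rho a1 a2 varpi th1 th2
     (fun i => X i w) (fun i => Y1 i w) (fun i => Y2 i w) (fun i => Z i w)] =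
  [set w | forall i, (~` [set w | good rho a1 a2 varpi th1 th2
      (X i w) (Y1 i w) (Y2 i w) (Z i w)]) w].
  apply/seteqP; split => w /=; rewrite outage_char //.
    by move=> h i gi; move/existsPn: h => /(_ i); rewrite gi.
  by move=> h; apply/existsPn => i; apply/negP => gi; exact: (h i gi).
apply: meas_forall => i; apply: measurableC; exact: meas_good.
Qed.
Lemma prod_le (R : realType) (I : Type) (s : seq I) (x : I -> \bar R) (c : R) :
  0 <= c -> (forall i, (0 <= x i)%E /\ (x i <= c%:E)%E) ->
  (\prod_(i <- s) x i <= (c ^+ size s)%:E)%E.
Proof.
move=> c0 hx; elim: s => [|a s IH]; first by rewrite big_nil expr0.
rewrite big_cons /= exprS EFinM.
have [h1 h2] := hx a.
apply: lee_pmul => //.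
by apply: prode_ge0 => i _; case: (hx i).
Qed.

Lemma prod_ge (R : realType) (I : Type) (s : seq I) (x : I -> \bar R) (c : R) :
  0 <= c -> (forall i, (c%:E <= x i)%E) ->
  ((c ^+ size s)%:E <= \prod_(i <- s) x i)%E.
Proof.
move=> c0 hx; elim: s => [|a s IH]; first by rewrite big_nil expr0.
rewrite big_cons /= exprS EFinM.
apply: lee_pmul => //; rewrite lee_fin ?exprn_ge0 //.
Qed.

Lemma sum_le (R : realType) (I : Type) (s : seq I) (x : I -> \bar R) (c : R) :
  (forall i, (x i <= c%:E)%E) ->
  (\sum_(i <- s) x i <= (c *+ size s)%:E)%E.
Proof.
move=> hx; elim: s => [|a s IH]; first by rewrite big_nil mulr0n.
by rewrite big_cons /= mulrS EFinD; apply: leeD.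
Qed.
Lemma lower_bound d (T : measurableType d) (R : realType) (P : probability T R) (K : nat)
  (alpha a1 a2 th1 th2 : R) (D1 D2 : R * R)
  (Q : 'I_K -> T -> R * R) (gSR gRD1 gRD2 Z : 'I_K -> T -> R) (rho : R) :
  0 < a1 -> 0 < th1 -> th1 / (2 * a1) < rho ->
  (forall i, measurable_fun setT (Q i)) -> (forall i, exp_distributed P (gSR i) 1) ->
  (forall i, measurable_fun setT (gRD1 i)) -> (forall i, measurable_fun setT (gRD2 i)) ->
  (forall i, measurable_fun setT (Z i)) ->
  mutual_indep P (relay_family Q gSR gRD1 gRD2 Z) ->
  (th1 * expR (-1) / (2 * a1)) ^+ K / rho ^+ K <=
    P_TRS P alpha a1 a2 0 th1 th2 D1 D2 Q gSR gRD1 gRD2 Z rho.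
Proof.
move=> a10 th10 hr mQ hS mR1 mR2 mZ hind.
have c0 : 0 < th1 / (2 * a1) by apply: divr_gt0 => //; apply: mulr_gt0.
have r0 : 0 < rho by apply: lt_trans hr.
set u := th1 / (2 * a1 * rho).
have u0 : 0 < u by apply: divr_gt0 => //; apply: mulr_gt0 => //; apply: mulr_gt0.
have u1 : u <= 1.
  rewrite /u ler_pdivrMr ?mul1r; last by apply: mulr_gt0 => //; apply: mulr_gt0.
  move: hr; rewrite ltr_pdivrMr; last by apply: mulr_gt0.
  move=> h; apply: ltW; apply: (lt_le_trans h); rewrite mulrC; lra.
pose A := fun i => gSR i @^-1` `[0%R, u]%classic.
have mA : forall i, measurable (A i).
  move=> i; rewrite -[A i]setTI; apply: (proj1 (hS i)) => //; exact: measurable_itv.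
have mL : measurable [set w | forall i, A i w] by apply: meas_forall.
rewrite /P_TRS; set O := [set w | _].
have mO : measurable O.
  apply: (meas_outage d T R K rho a1 a2 0 th1 th2
    (fun i w => gSR i w / pathloss alpha (dist2 (Q i w) (0, 0)))
    (fun i w => gRD1 i w / pathloss alpha (dist2 (Q i w) D1))
    (fun i w => gRD2 i w / pathloss alpha (dist2 (Q i w) D2)) Z th10) => // i.
  - exact: mf_ratio (mQ i) (proj1 (hS i)).
  - exact: mf_ratio (mQ i) (mR1 i).
  - exact: mf_ratio (mQ i) (mR2 i).
have sub : [set w | forall i, A i w] `<=` O.
  move=> w hw; rewrite /O /= outage_char //; apply/existsPn => i.
  apply/negP => /and5P [_ _ _ h4 _].
  move: h4; rewrite /gam_D1_R !mulr0 !mul0r add0r divr1.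
  have := hw i; rewrite /A /= in_itv /= => /andP [g0 gu].
  set PL := pathloss alpha _.
  have PL1 : 1 <= PL by rewrite /PL /pathloss lerDl powR_ge0.
  have PL0 : 0 < PL by apply: lt_le_trans PL1.
  have hX : gSR i w / PL <= u.
    apply: le_trans gu; rewrite ler_pdivrMr //; nra.
  have hX' : rho * (gSR i w / PL) * a1 <= rho * u * a1.
    by rewrite ler_pM2r // ler_pM2l.
  have hu : rho * u * a1 = th1 / 2.
    by rewrite /u; field; rewrite !lt0r_neq0.
  move=> h; lra.
have hF : forall i, relay_family Q gSR gRD1 gRD2 Z (i, Ordinal (isT : (1 < 5)%N)) (A i).
  move=> i; rewrite /relay_family /=; exists `[0%R, u]%classic; split => //.
have ind := indep_prod d T R P K (relay_family Q gSR gRD1 gRD2 Z)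
  (fun _ => Ordinal (isT : (1 < 5)%N)) A hind hF.
have hle : (((u * expR (-1)) ^+ size (enum 'I_K))%:E <= P O)%E.
  have hle0 : (P [set w | forall i, A i w] <= P O)%E.
    by apply: le_measure; rewrite ?inE.
  apply: le_trans hle0; rewrite ind; apply: prod_ge.
    by rewrite mulr_ge0 // ?ltW // expR_ge0.
  move=> i; exact: exp_ge (hS i) u0 u1.
rewrite (PE _ _ _ _ _ mO) lee_fin size_enum_ord in hle.
apply: le_trans hle; rewrite -expr_div_n; apply: lerXn2r.
- by apply: divr_ge0; [apply: divr_ge0; [apply: mulr_ge0; [apply: ltW|exact: expR_ge0]|apply: ltW; apply: mulr_gt0]|apply: ltW].
- by apply: mulr_ge0; [apply: ltW | exact: expR_ge0].
rewrite /u le_eqVlt; apply/orP; left; apply/eqP; field.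
by rewrite !lt0r_neq0.
Qed.
Lemma mpre d (T : measurableType d) (R : realType) (g : T -> R) (B : set R) :
  measurable_fun setT g -> measurable B -> measurable (g @^-1` B).
Proof. by move=> mg mB; rewrite -[_ @^-1` _]setTI; apply: mg. Qed.

Lemma upper_bound d (T : measurableType d) (R : realType) (P : probability T R) (K : nat)
  (RD alpha a1 a2 th1 th2 : R) (D1 D2 : R * R)
  (Q : 'I_K -> T -> R * R) (gSR gRD1 gRD2 Z : 'I_K -> T -> R) (rho Lmax : R) :
  0 < a1 -> a1 * th2 < a2 -> 0 < th1 -> 0 < th2 -> 0 < rho -> 1 <= Lmax ->
  (forall p, disc RD p -> pathloss alpha (dist2 p (0, 0)) <= Lmax /\
      pathloss alpha (dist2 p D1) <= Lmax /\ pathloss alpha (dist2 p D2) <= Lmax) ->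
  (forall i, unif_disc_distributed P (Q i) RD) ->
  (forall i, exp_distributed P (gSR i) 1) ->
  (forall i, exp_distributed P (gRD1 i) 1) ->
  (forall i, exp_distributed P (gRD2 i) 1) ->
  (forall i, measurable_fun setT (Z i)) ->
  mutual_indep P (relay_family Q gSR gRD1 gRD2 Z) ->
  P_TRS P alpha a1 a2 0 th1 th2 D1 D2 Q gSR gRD1 gRD2 Z rho <=
  ((size (enum {ffun 'I_K -> 'I_5}))%:R + 1) *
    (Lmax * Num.max (th2 / (a2 - a1 * th2)) (th1 / a1)) ^+ K / rho ^+ K.
Proof.
move=> a10 ath2 th10 th20 r0 L1 hL hQ hS hR1 hR2 mZ hind.
set m0 := Num.max _ _.
have dd0 : 0 < a2 - a1 * th2 by rewrite subr_gt0.
have m00 : 0 < m0 by rewrite lt_max divr_gt0.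
have L0 : 0 < Lmax by apply: lt_le_trans L1.
set s := Lmax * m0.
have s0 : 0 < s by apply: mulr_gt0.
set v := s / rho.
have v0 : 0 < v by apply: divr_gt0.
have mQ : forall i, measurable_fun setT (Q i) by move=> i; case: (hQ i).
pose H := fun (i : 'I_K) (k : 'I_5) => match nat_of_ord k with
  | 0 => Q i @^-1` (~` disc RD)
  | 1 => gSR i @^-1` `]-oo, v[%classic
  | 2 => gRD1 i @^-1` `]-oo, v[%classic
  | 3 => gRD2 i @^-1` `]-oo, v[%classic
  | _ => Z i @^-1` set0 end.
have mH : forall i k, measurable (H i k).
  move=> i [[|[|[|[|k]]]] hk]; rewrite /H /=.
  - rewrite -[_ @^-1` _]setTI; apply: (mQ i) => //; apply: measurableC; exact: meas_disc.
  - apply: mpre; [exact: (proj1 (hS i)) | exact: measurable_itv].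
  - apply: mpre; [exact: (proj1 (hR1 i)) | exact: measurable_itv].
  - apply: mpre; [exact: (proj1 (hR2 i)) | exact: measurable_itv].
  - by rewrite preimage_set0.
have HF : forall i k, relay_family Q gSR gRD1 gRD2 Z (i, k) (H i k).
  move=> i [[|[|[|[|k]]]] hk]; rewrite /H /relay_family /=.
  - by exists (~` disc RD); split => //; apply: measurableC; exact: meas_disc.
  - by exists `]-oo, v[%classic; split => //; exact: measurable_itv.
  - by exists `]-oo, v[%classic; split => //; exact: measurable_itv.
  - by exists `]-oo, v[%classic; split => //; exact: measurable_itv.
  - by exists set0; split.
have HP : forall i k, (P (H i k) <= v%:E)%E.
  move=> i [[|[|[|[|k]]]] hk]; rewrite /H /=.
  - rewrite (proj2 (hQ i)); last by apply: measurableC; exact: meas_disc.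
    by rewrite setICl measure0 mul0e lee_fin ltW.
  - exact: exp_le (hS i) v0.
  - exact: exp_le (hR1 i) v0.
  - exact: exp_le (hR2 i) v0.
  - by rewrite preimage_set0 measure0 lee_fin ltW.
rewrite /P_TRS; set O := [set w | _].
have mO : measurable O.
  apply: (meas_outage d T R K rho a1 a2 0 th1 th2
    (fun i w => gSR i w / pathloss alpha (dist2 (Q i w) (0, 0)))
    (fun i w => gRD1 i w / pathloss alpha (dist2 (Q i w) D1))
    (fun i w => gRD2 i w / pathloss alpha (dist2 (Q i w) D2)) Z th10) => // i.
  - exact: mf_ratio (mQ i) (proj1 (hS i)).
  - exact: mf_ratio (mQ i) (proj1 (hR1 i)).
  - exact: mf_ratio (mQ i) (proj1 (hR2 i)).
pose U := \big[setU/set0]_(f <- enum {ffun 'I_K -> 'I_5}) [set w | forall i, H i (f i) w].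
have mU : measurable U.
  by apply: bigsetU_measurable => f _; apply: meas_forall => i; exact: mH.
have sub : O `<=` U.
  move=> w; rewrite /O /= outage_char // => /existsPn hw.
  have hex : forall i, exists k, H i k w.
    move=> i; apply: contrapT => /forallNP hn.
    have hq : disc RD (Q i w).
      by apply: contrapT => hq; apply: (hn (Ordinal (isT : (0 < 5)%N))).
    have hg : forall (g : T -> R) k, (nat_of_ord k = 1 \/ nat_of_ord k = 2 \/ nat_of_ord k = 3)%N ->
        H i k w = (g w < v) -> v <= g w.
      move=> g k _ e; rewrite leNgt; apply/negP => hlt; apply: (hn k).
      by rewrite e.
    have g1 : v <= gSR i w.
      apply: (hg _ (Ordinal (isT : (1 < 5)%N))); first by left.
      by rewrite /H /= in_itv.
    have g2 : v <= gRD1 i w.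
      apply: (hg _ (Ordinal (isT : (2 < 5)%N))); first by right; left.
      by rewrite /H /= in_itv.
    have g3 : v <= gRD2 i w.
      apply: (hg _ (Ordinal (isT : (3 < 5)%N))); first by right; right.
      by rewrite /H /= in_itv.
    have [hL0 [hL1 hL2]] := hL _ hq.
    have pl1 : forall c, 1 <= pathloss alpha (dist2 (Q i w) c).
      by move=> c; rewrite /pathloss lerDl powR_ge0.
    have sm : s / Lmax = m0 by rewrite /s [Lmax * m0]mulrC mulfK // gt_eqF.
    have t0 := tbound _ _ _ _ _ _ r0 s0 (pl1 (0, 0)) hL0 g1.
    have t1 := tbound _ _ _ _ _ _ r0 s0 (pl1 D1) hL1 g2.
    have t2 := tbound _ _ _ _ _ _ r0 s0 (pl1 D2) hL2 g3.
    rewrite sm in t0 t1 t2.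
    have c2 : forall t, m0 <= t -> th2 <= t * a2 / (t * a1 + 1).
      move=> t ht; apply: cond2 => //; apply: le_trans ht; by rewrite /m0 le_max lexx.
    have c1 : forall t, m0 <= t -> th1 <= t * a1.
      move=> t ht; apply: cond1 => //; apply: le_trans ht; by rewrite /m0 le_max lexx orbT.
    move: (hw i); rewrite /good /gam_D2_R /gam_D2_D1 /gam_D2 /gam_D1_R /gam_D1.
    rewrite !mulr0 !mul0r addr0 add0r divr1 !mulrA.
    by rewrite !c2 ?c1 //; rewrite -mulrA.
  have [f hf] := choice hex.
  apply: (in_bigsetU _ _ _ _ [ffun i => f i]); first exact: mem_enum.
  by move=> i; rewrite ffunE; apply: hf.
have hle : (P O <= P U)%E by apply: le_measure; rewrite ?inE.
have hle2 := subadd_seq d T R P _ (enum {ffun 'I_K -> 'I_5})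
  (fun f => [set w | forall i, H i (f i) w]) (fun f => meas_forall _ _ _ _ (fun i => mH i (f i))).
have hle3 : (\sum_(f <- enum {ffun 'I_K -> 'I_5}) P [set w | forall i, H i (f i) w] <=
    ((v ^+ K) *+ size (enum {ffun 'I_K -> 'I_5}))%:E)%E.
  apply: sum_le => f.
  rewrite (indep_prod d T R P K _ (fun i => f i) (fun i => H i (f i)) hind (fun i => HF i (f i))).
  rewrite -[X in (_ <= (v ^+ X)%:E)%E](size_enum_ord K).
  apply: prod_le; first exact: ltW.
  by move=> i; split; [exact: measure_ge0 | exact: HP].
have := le_trans hle (le_trans hle2 hle3).
rewrite (PE _ _ _ _ _ mO) lee_fin => hfin.
apply: (le_trans hfin).
rewrite /v expr_div_n -mulr_natl mulrA ler_pM2r ?invr_gt0 ?exprn_gt0 //.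
rewrite ler_pM2r ?exprn_gt0 //; lra.
Qed.
Theorem mainTheorem4 (d : measure_display) (T : measurableType d)
  (R : realType) (P : probability T R) (K : nat) (RD alpha OmegaLI RD1 RD2 a1 a2 : R)
  (D1 D2 : R * R)
  (Q : 'I_K -> T -> R * R) (gSR gRD1 gRD2 Z : 'I_K -> T -> R) :
  (0 < K)%N -> 0 < RD -> 0 < alpha -> 0 < OmegaLI ->
  0 < dist2 D1 (0, 0) -> 0 < dist2 D2 (0, 0) ->
  0 < RD1 -> 0 < RD2 ->
  0 < a1 -> a1 < a2 -> a1 + a2 = 1 -> a2 > a1 * hd_threshold RD2 ->
  (forall i, unif_disc_distributed P (Q i) RD) ->
  (forall i, exp_distributed P (gSR i) 1) ->
  (forall i, exp_distributed P (gRD1 i) 1) ->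
  (forall i, exp_distributed P (gRD2 i) 1) ->
  (forall i, exp_distributed P (Z i) OmegaLI) ->
  mutual_indep P (relay_family Q gSR gRD1 gRD2 Z) ->
  (- (ln (P_TRS P alpha a1 a2 0 (hd_threshold RD1) (hd_threshold RD2) D1 D2
            Q gSR gRD1 gRD2 Z rho) / ln rho))
    @[rho --> +oo] --> (K%:R : R).
Proof.
move=> K0 RD0 al0 Om0 dD1 dD2 R10 R20 a10 a12 asum ath2 hQ hS hR1 hR2 hZ hind.
set th1 := hd_threshold RD1; set th2 := hd_threshold RD2.
have th10 : 0 < th1 by apply: hd_pos.
have th20 : 0 < th2 by apply: hd_pos.
set S := D1.1 ^+ 2 + D1.2 ^+ 2 + (D2.1 ^+ 2 + D2.2 ^+ 2).
have S0 : 0 <= S.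
  have := sqr_ge0 D1.1; have := sqr_ge0 D1.2; have := sqr_ge0 D2.1;
  have := sqr_ge0 D2.2; rewrite /S; lra.
set Mx := Num.sqrt (2 * RD ^+ 2 + 2 * S).
set Lmax := 1 + Mx `^ alpha.
have L1 : 1 <= Lmax by rewrite /Lmax lerDl powR_ge0.
have hc : forall (p c : R * R), c.1 ^+ 2 + c.2 ^+ 2 <= S -> disc RD p ->
    pathloss alpha (dist2 p c) <= Lmax.
  move=> p c hcS hp; rewrite /pathloss /Lmax lerD2l.
  apply: ge0_ler_powR; rewrite ?nnegrE ?sqrtr_ge0 //; first exact: ltW.
  rewrite /dist2 /Mx ler_sqrt; last first.
    by apply: addr_ge0; apply: mulr_ge0 => //; exact: sqr_ge0.
  move: hp; rewrite /disc /= => hp.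
  have := sqr_ge0 (p.1 + c.1); have := sqr_ge0 (p.2 + c.2); nra.
have hL : forall p, disc RD p -> pathloss alpha (dist2 p (0, 0)) <= Lmax /\
    pathloss alpha (dist2 p D1) <= Lmax /\ pathloss alpha (dist2 p D2) <= Lmax.
  move=> p hp; split; [|split]; apply: hc => //=.
  - by rewrite expr0n /= addr0.
  - have := sqr_ge0 D2.1; have := sqr_ge0 D2.2; rewrite /S; lra.
  - have := sqr_ge0 D1.1; have := sqr_ge0 D1.2; rewrite /S; lra.
have mQ : forall i, measurable_fun setT (Q i) by move=> i; case: (hQ i).
have mR1 : forall i, measurable_fun setT (gRD1 i) by move=> i; case: (hR1 i).
have mR2 : forall i, measurable_fun setT (gRD2 i) by move=> i; case: (hR2 i).
have mZ : forall i, measurable_fun setT (Z i) by move=> i; case: (hZ i).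
set m0 := Num.max (th2 / (a2 - a1 * th2)) (th1 / a1).
have dd0 : 0 < a2 - a1 * th2 by rewrite subr_gt0.
have m00 : 0 < m0 by rewrite lt_max divr_gt0.
apply: (limit_squeeze R K
  (fun rho => P_TRS P alpha a1 a2 0 th1 th2 D1 D2 Q gSR gRD1 gRD2 Z rho)
  ((th1 * expR (-1) / (2 * a1)) ^+ K)
  (((size (enum {ffun 'I_K -> 'I_5}))%:R + 1) * (Lmax * m0) ^+ K)
  (th1 / (2 * a1))).
- apply: exprn_gt0; apply: divr_gt0; last by apply: mulr_gt0.
  by apply: mulr_gt0 => //; exact: expR_gt0.
- apply: mulr_gt0; first by apply: ltr_wpDl.
  by apply: exprn_gt0; apply: mulr_gt0 => //; apply: lt_le_trans L1.
move=> rho hr; split.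
  exact: lower_bound.
have r0 : 0 < rho.
  by apply: lt_trans hr; apply: divr_gt0 => //; apply: mulr_gt0.
rewrite -mulrA.
have := upper_bound d T R P K RD alpha a1 a2 th1 th2 D1 D2 Q gSR gRD1 gRD2 Z rho Lmax
  a10 ath2 th10 th20 r0 L1 hL hQ hS hR1 hR2 mZ hind.
by rewrite -mulrA.
Qed.
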